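(* Let $X$ be a finite-dimensional real Banach space such that each $x\in S_X$ is $\varepsilon_x$-smooth for some $\varepsilon_x\in[0,2)$ (depending on $x$). Then $X$ is approximately smooth, i.e. there exists $\varepsilon\in[0,2)$ such that every $x\in S_X$ is $\varepsilon$-smooth.
   Context: For $x\in X\setminus\{\theta\}$, $J(x)=\{f\in S_{X^*}: f(x)=\|x\|\}$ (supporting functionals), and $x$ is $\varepsilon$-smooth if $\operatorname{diam}J(x)=\sup_{f,g\in J(x)}\|f-g\|\le\varepsilon$. $S_X$ is the unit sphere of $X$. *)

(* Defs.v *)
From HB Require Import structures.
From mathcomp Require Import all_boot all_order all_algebra.
From mathcomp Require Import all_classical all_reals topology normedtype.
Set Implicit Arguments. Unset Strict Implicit. Unset Printing Implicit Defensive.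
Import Order.TTheory GRing.Theory Num.Theory.
Import numFieldNormedType.Exports.
Local Open Scope classical_set_scope.
Local Open Scope ring_scope.

Section Defs.
Context {R : realType} {V : normedModType R}.

Definition lin_fun (f : V -> R) : Prop :=
  forall (a : R) (x y : V), f (a *: x + y) = a * f x + f y.

Definition dual_elt (f : V -> R) : Prop := lin_fun f /\ continuous f.

Definition dnorm (f : V -> R) : R :=
  sup [set `|f x| | x in [set x : V | `|x| <= 1]].

Definition supp_fun (x : V) : set (V -> R) :=
  [set f | dual_elt f /\ dnorm f = 1 /\ f x = `|x|].

Definition eps_smooth (eps : R) (x : V) : Prop :=
  forall f g, supp_fun x f -> supp_fun x g -> dnorm (f \- g) <= eps.

Definition finite_dim : Prop :=
  exists (n : nat) (phi : V -> 'rV[R]_n),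
    (forall (a : R) (x y : V), phi (a *: x + y) = a *: phi x + phi y)
    /\ bijective phi.
End Defs.
Arguments finite_dim R V : clear implicits.

(* Main.v *)
Require Import Defs.
From HB Require Import structures.
From mathcomp Require Import all_boot all_order all_algebra.
From mathcomp Require Import all_classical all_reals topology normedtype.
From mathcomp Require Import derive.
From mathcomp Require Import lra.
Import Order.TTheory GRing.Theory Num.Theory.
Import numFieldNormedType.Exports.
Local Open Scope classical_set_scope.
Local Open Scope ring_scope.
Lemma lip_cont (R : realType) (T : normedModType R) (f : T -> R) k :
  0 < k -> (forall x y, `|f x - f y| <= k * `|x - y|) -> continuous f.
Proof.
move=> k0 H x; apply/cvgrPdist_lt => e e0.
have := @cvgr_dist_lt _ _ _ (nbhs x) _ id x (@cvg_id _ (nbhs x)) (e / k).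
rewrite divr_gt0 // => /(_ _ isT).
apply: filterS => y hy.
by rewrite (le_lt_trans (H _ _)) // -ltr_pdivlMl // mulrC.
Qed.

Lemma cont_sum (R : realType) (T : topologicalType) (I : Type) (s : seq I)
  (F : I -> T -> R) :
  (forall i, continuous (F i)) -> continuous (fun x => \sum_(i <- s) F i x).
Proof.
move=> H; elim: s => [|a s IH].
  have -> : (fun x => \sum_(i <- [::]) F i x) = (fun=> 0) by apply: funext => y; rewrite big_nil.
  exact: cst_continuous.
have -> : (fun x => \sum_(i <- a :: s) F i x) = (fun x => F a x + \sum_(i <- s) F i x).
  by apply: funext => y; rewrite big_cons.
by move=> x; apply: cvgD; [exact: H | exact: IH].
Qed.

Lemma cont_fst (T U : topologicalType) : continuous (@fst T U).
Proof. by move=> p; exact: cvg_fst. Qed.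

Lemma cont_snd (T U : topologicalType) : continuous (@snd T U).
Proof. by move=> p; exact: cvg_snd. Qed.
Section Aux.
Context (R : realType) (V : normedModType R) (n : nat)
  (phi : V -> 'rV[R]_n) (psi : 'rV[R]_n -> V)
  (philin : forall (a : R) (x y : V), phi (a *: x + y) = a *: phi x + phi y)
  (phiK : cancel phi psi) (psiK : cancel psi phi).

Lemma psilin a u w : psi (a *: u + w) = a *: psi u + psi w.
Proof. by apply: (can_inj phiK); rewrite philin !psiK. Qed.

Lemma phi0 : phi 0 = 0.
Proof.
have h := philin 1 0 0; rewrite !scale1r addr0 in h.
have : phi 0 + phi 0 - phi 0 = phi 0 - phi 0 by rewrite -h.
by rewrite addrK subrr.
Qed.

Lemma psi0 : psi 0 = 0.
Proof. by rewrite -phi0 phiK. Qed.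

Lemma psiD u w : psi (u + w) = psi u + psi w.
Proof. by have := psilin 1 u w; rewrite !scale1r. Qed.

Lemma psiZ a u : psi (a *: u) = a *: psi u.
Proof. by have := psilin a u 0; rewrite psi0 !addr0. Qed.

Lemma psiN u : psi (- u) = - psi u.
Proof. by rewrite -scaleN1r psiZ scaleN1r. Qed.

Definition N (w : 'rV[R]_n) := `|psi w|.

Lemma NZ a w : N (a *: w) = `|a| * N w.
Proof. by rewrite /N psiZ normrZ. Qed.

Lemma psi_sum (F : 'I_n -> 'rV[R]_n) : psi (\sum_i F i) = \sum_i psi (F i).
Proof. exact: (big_morph psi psiD psi0). Qed.

Lemma coord_le (w : 'rV[R]_n) i : `|w 0 i| <= `|w|.
Proof.
rewrite [leRHS]/Num.norm /= mx_normrE; apply/bigmax_geP; right => /=.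
by exists (0, i).
Qed.

Lemma ei_le i : `|('e_i : 'rV[R]_n)| <= 1.
Proof.
rewrite [leLHS]/Num.norm /= mx_normrE; apply/bigmax_leP; split => //= j _.
by rewrite mxE; case: (_ && _); rewrite ?normr1 ?normr0.
Qed.

Definition Cst := 1 + \sum_i N 'e_i.

Lemma Cst_gt0 : 0 < Cst.
Proof. by rewrite /Cst ltr_pwDl // sumr_ge0 // => i _; rewrite /N. Qed.

Lemma Nup w : N w <= Cst * `|w|.
Proof.
rewrite {1}/N {1}(row_sum_delta w) psi_sum.
apply: (le_trans (ler_norm_sum _ _ _)).
apply: (@le_trans _ _ (\sum_i `|w| * N 'e_i)).
  apply: ler_sum => i _; rewrite psiZ normrZ ler_wpM2r //.
  exact: coord_le.
rewrite -mulr_sumr mulrC ler_wpM2r //.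
by rewrite /Cst lerDr.
Qed.


Lemma psiB u w : psi (u - w) = psi u - psi w.
Proof. by rewrite psiD psiN. Qed.

Lemma Nlip u w : `|N u - N w| <= Cst * `|u - w|.
Proof.
apply: le_trans (ler_dist_dist _ _) _.
by rewrite -psiB Nup.
Qed.

Lemma Ncont : continuous N.
Proof. have := @lip_cont R _ N Cst Cst_gt0 Nlip. exact. Qed.

Lemma N_eq0 w : N w = 0 -> w = 0.
Proof.
move/normr0_eq0 => h; by rewrite -(psiK w) h phi0.
Qed.

Lemma sphere_closed : closed [set w : 'rV[R]_n | `|w| = 1].
Proof.
exact: ((continuous_closedP _).1 (@norm_continuous R 'rV[R]_n) _ (@closed_eq R 1)).
Qed.

Lemma sphere_bounded : bounded_set [set w : 'rV[R]_n | `|w| = 1].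
Proof.
rewrite /= /bounded_near; near=> M => w /= ->; near: M; exact: nbhs_pinfty_ge.
Unshelve. all: by end_near. Qed.

Lemma normalize (w : 'rV[R]_n) : w != 0 -> `| `|w|^-1 *: w | = 1.
Proof.
by move=> w0; rewrite normrZ normfV normr_id mulVf // normr_eq0.
Qed.

Lemma Nlow : exists c, 0 < c /\ forall w, c * `|w| <= N w.
Proof.
set S := [set w : 'rV[R]_n | `|w| = 1].
case: (pselect (S !=set0)) => [S0|S0]; last first.
  exists 1; split => // w.
  have [->|w0] := eqVneq w 0; first by rewrite normr0 mulr0 /N.
  by exfalso; apply: S0; exists (`|w|^-1 *: w); exact: normalize.
have cS : compact S by apply: bounded_closed_compact; [exact: sphere_bounded|exact: sphere_closed].
have [c cS' cmin] := compact_EVT_min S0 cS (@continuous_subspaceT _ _ S N Ncont).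
have Sc : `|c| = 1 by move: cS'; rewrite inE.
have c0 : 0 < N c.
  rewrite lt_neqAle /N normr_ge0 andbT eq_sym; apply/negP => /eqP/N_eq0 c0.
  by move: Sc; rewrite c0 normr0 => /eqP; rewrite eq_sym oner_eq0.
exists (N c); split => // w.
have [->|w0] := eqVneq w 0; first by rewrite normr0 mulr0 /N.
have := cmin (`|w|^-1 *: w); rewrite inE => /(_ (normalize _ w0)).
rewrite NZ normfV normr_id => h.
have := ler_wpM2l (normr_ge0 w) h.
by rewrite mulrA mulfV ?normr_eq0 // mul1r mulrC.
Qed.


Set Implicit Arguments. Unset Strict Implicit.

Lemma lin0 (f : V -> R) : lin_fun f -> f 0 = 0.
Proof.
move=> lf; have h := lf 1 0 0; rewrite scale1r addr0 mul1r in h.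
have : f 0 + f 0 - f 0 = f 0 - f 0 by rewrite -h.
by rewrite addrK subrr.
Qed.

Lemma linZ (f : V -> R) a v : lin_fun f -> f (a *: v) = a * f v.
Proof. by move=> lf; have := lf a v 0; rewrite addr0 (lin0 lf) addr0. Qed.

Lemma linD (f : V -> R) v v' : lin_fun f -> f (v + v') = f v + f v'.
Proof. by move=> lf; have := lf 1 v v'; rewrite scale1r mul1r. Qed.

Lemma linB (f : V -> R) v v' : lin_fun f -> f (v - v') = f v - f v'.
Proof.
move=> lf; have := linD (v - v') v' lf; rewrite subrK => ->.
by rewrite addrK.
Qed.

Lemma lin_sum (f : V -> R) (F : 'I_n -> V) : lin_fun f ->
  f (\sum_i F i) = \sum_i f (F i).
Proof. by move=> lf; apply: (big_morph f (fun x y => linD x y lf) (lin0 lf)). Qed.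

Lemma dnorm1_bound (f : V -> R) : lin_fun f -> dnorm f = 1 ->
  forall v, `|f v| <= `|v|.
Proof.
move=> lf d1.
have hs : has_sup [set `|f x| | x in [set x : V | `|x| <= 1]].
  split; first by exists `|f 0|, 0 => //=; rewrite normr0.
  apply: contrapT => hub.
  have : ~ has_sup [set `|f x| | x in [set x : V | `|x| <= 1]] by move=> [].
  move/sup_out; rewrite -/(dnorm f) d1 => /eqP; rewrite oner_eq0 //.
have h1 v : `|v| <= 1 -> `|f v| <= 1.
  move=> v1; rewrite -d1; apply: sup_upper_bound => //; by exists v.
move=> v; have [->|v0] := eqVneq v 0; first by rewrite (lin0 lf) !normr0.
have := h1 (`|v|^-1 *: v); rewrite normrZ normfV normr_id mulVf ?normr_eq0 // lexx => /(_ isT).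
rewrite linZ // normrM normfV normr_id => h.
have := ler_wpM2l (normr_ge0 v) h.
by rewrite mulrA mulfV ?normr_eq0 // mul1r mulr1.
Qed.

Lemma dnorm_le (f : V -> R) k : 0 <= k -> (forall v, `|f v| <= k * `|v|) ->
  dnorm f <= k.
Proof.
move=> k0 hb; apply: ge_sup; first by exists `|f 0|, 0 => //=; rewrite normr0.
move=> _ [v /= v1 <-]; apply: le_trans (hb v) _.
by rewrite -{2}[k]mulr1 ler_wpM2l.
Qed.

Lemma dnorm_ge (f : V -> R) k v : 0 <= k -> (forall v, `|f v| <= k * `|v|) ->
  `|v| <= 1 -> `|f v| <= dnorm f.
Proof.
move=> k0 hb v1; apply: sup_upper_bound; last by exists v.
split; first by exists `|f 0|, 0 => //=; rewrite normr0.
exists k => _ [u /= u1 <-]; apply: le_trans (hb u) _.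
by rewrite -{2}[k]mulr1 ler_wpM2l.
Qed.

Definition pr (w a : 'rV[R]_n) : R := \sum_i w 0 i * a 0 i.

Lemma prL s w w' a : pr (s *: w + w') a = s * pr w a + pr w' a.
Proof.
rewrite /pr mulr_sumr -big_split /=; apply: eq_bigr => i _.
by rewrite !mxE mulrDl mulrA.
Qed.

Lemma pr_e j a : pr 'e_j a = a 0 j.
Proof.
rewrite /pr (bigD1 j) //= big1 ?addr0; first by rewrite mxE !eqxx mul1r.
by move=> i ij; rewrite mxE (negbTE ij) andbF mul0r.
Qed.

Definition Fa (a : 'rV[R]_n) : V -> R := fun v => pr (phi v) a.
Definition cf (f : V -> R) : 'rV[R]_n := \row_i f (psi 'e_i).

Lemma pr_cf f v : lin_fun f -> pr (phi v) (cf f) = f v.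
Proof.
move=> lf; rewrite -{2}(phiK v) {2}(row_sum_delta (phi v)) psi_sum lin_sum //.
rewrite /pr; apply: eq_bigr => i _; by rewrite psiZ linZ // mxE.
Qed.

Definition Jc (u a : 'rV[R]_n) := (forall w, `|pr w a| <= N w) /\ pr u a = 1.

Lemma Fa_lin a : lin_fun (Fa a).
Proof. by move=> s x y; rewrite /Fa philin prL. Qed.

Lemma Fa_bound a u : Jc u a -> forall v, `|Fa a v| <= `|v|.
Proof. by move=> [hb _] v; rewrite /Fa (le_trans (hb _)) // /N phiK. Qed.

Lemma Fa_supp a u : N u = 1 -> Jc u a -> supp_fun (psi u) (Fa a).
Proof.
move=> Nu J; have lf := Fa_lin a; have hb := Fa_bound J.
have Fu : Fa a (psi u) = 1 by rewrite /Fa psiK J.2.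
split; [split => //|split].
- apply: (@lip_cont R V _ 1) => // x y.
  by rewrite -linB // mul1r hb.
- apply/le_anti/andP; split.
    by apply: dnorm_le => // v; rewrite mul1r.
  have <- : `|Fa a (psi u)| = 1 by rewrite Fu normr1.
  by apply: (@dnorm_ge _ 1) => // [v|]; rewrite ?mul1r -/(N u) ?Nu.
- by rewrite Fu -/(N u) Nu.
Qed.

Definition P := (('rV[R]_n * 'rV[R]_n) * ('rV[R]_n * 'rV[R]_n))%type.

Definition Kb (s : P -> 'rV[R]_n) : set P :=
  \bigcap_(w in setT) [set p | `|pr w (s p)| <= N w].
Definition Ke (s : P -> 'rV[R]_n) : set P := [set p | pr p.1.1 (s p) = 1].
Definition K : set P :=
  [set p | N p.1.1 = 1] `&` [set p | N p.1.2 <= 1] `&`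
  Kb (fun p => p.2.1) `&` Ke (fun p => p.2.1) `&`
  Kb (fun p => p.2.2) `&` Ke (fun p => p.2.2).
Definition G (p : P) : R := pr p.1.2 p.2.1 - pr p.1.2 p.2.2.

Lemma cont_comp' (T U W : topologicalType) (f : T -> U) (g : U -> W) :
  continuous f -> continuous g -> continuous (fun x => g (f x)).
Proof. by move=> hf hg x; apply: continuous_comp; [exact: hf | exact: hg]. Qed.

Lemma c11 : continuous (fun p : P => p.1.1).
Proof. exact: (cont_comp' (@cont_fst _ _) (@cont_fst _ _)). Qed.
Lemma c12 : continuous (fun p : P => p.1.2).
Proof. exact: (cont_comp' (@cont_fst _ _) (@cont_snd _ _)). Qed.
Lemma c21 : continuous (fun p : P => p.2.1).
Proof. exact: (cont_comp' (@cont_snd _ _) (@cont_fst _ _)). Qed.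
Lemma c22 : continuous (fun p : P => p.2.2).
Proof. exact: (cont_comp' (@cont_snd _ _) (@cont_snd _ _)). Qed.

Lemma cont_pr (s t : P -> 'rV[R]_n) : continuous s -> continuous t ->
  continuous (fun p => pr (s p) (t p)).
Proof.
move=> hs ht; rewrite /pr; apply: cont_sum => i p.
apply: continuousM.
  exact: (cont_comp' hs (@coord_continuous R 1 n 0 i)).
exact: (cont_comp' ht (@coord_continuous R 1 n 0 i)).
Qed.

Lemma cst_rv (w : 'rV[R]_n) : continuous (fun _ : P => w).
Proof. by move=> p; exact: cvg_cst. Qed.

Lemma K_closed : closed K.
Proof.
have clp (f : P -> R) (A : set R) : continuous f -> closed A -> closed (f @^-1` A).
  by move=> hf hA; exact: ((continuous_closedP f).1 hf A hA).
have cKb (s : P -> 'rV[R]_n) : continuous s -> closed (Kb s).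
  move=> hs; apply: closed_bigI => w _.
  apply: (clp (fun p => `|pr w (s p)|) [set x | x <= N w]); [|exact: closed_le].
  apply: (@cont_comp' P R R (fun p => pr w (s p)) (fun x : R => `|x|)).
    exact: (cont_pr (@cst_rv w) hs).
  exact: norm_continuous.
have cKe (s : P -> 'rV[R]_n) : continuous s -> closed (Ke s).
  move=> hs; apply: (clp (fun p => pr p.1.1 (s p)) [set x | x = 1]);
    [exact: cont_pr c11 hs | exact: closed_eq].
repeat apply: closedI.
- apply: (clp (fun p => N p.1.1) [set x | x = 1]); last exact: closed_eq.
  exact: (cont_comp' c11 Ncont).
- apply: (clp (fun p => N p.1.2) [set x | x <= 1]); last exact: closed_le.
  exact: (cont_comp' c12 Ncont).
- exact: cKb c21.
- exact: cKe c21.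
- exact: cKb c22.
- exact: cKe c22.
Qed.

Lemma G_cont : continuous G.
Proof.
move=> p; apply: cvgB.
  exact: (cont_pr c12 c21).
exact: (cont_pr c12 c22).
Qed.

Lemma ball_compact r : compact [set w : 'rV[R]_n | `|w| <= r].
Proof.
apply: bounded_closed_compact.
  rewrite /= /bounded_near; near=> M => w /= h; apply: (le_trans h).
  near: M; apply: nbhs_pinfty_ge; exact: num_real.
exact: ((continuous_closedP _).1 (@norm_continuous R 'rV[R]_n) _ (@closed_le R r)).
Unshelve. all: by end_near. Qed.

Lemma a_bound a : (forall w, `|pr w a| <= N w) -> `|a| <= Cst.
Proof.
move=> hb; rewrite [leLHS]/Num.norm /= mx_normrE; apply/bigmax_leP.
split => /=; first exact: ltW Cst_gt0.
move=> [i j] _ /=; rewrite (ord1 i) -pr_e; apply: (le_trans (hb _)).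
apply: (le_trans (Nup _)); rewrite -{2}[Cst]mulr1 ler_wpM2l ?ei_le //.
exact: ltW Cst_gt0.
Qed.

Lemma K_compact : compact K.
Proof.
have [c [c0 hc]] := Nlow.
have hB := (compact_setX
  (compact_setX (@ball_compact c^-1) (@ball_compact c^-1))
  (compact_setX (@ball_compact Cst) (@ball_compact Cst))).
apply: (subclosed_compact K_closed hB).
have hl (u : 'rV[R]_n) : N u <= 1 -> `|u| <= c^-1.
  move=> hu; rewrite -(ler_pM2l c0) mulfV ?gt_eqF //.
  exact: le_trans (hc u) hu.
move=> p [[[[[hu hw] hb1] he1] hb2] he2]; split; split => /=.
- by apply: hl; rewrite hu.
- exact: hl.
- by apply: a_bound => w; exact: (hb1 w Logic.I).
- by apply: a_bound => w; exact: (hb2 w Logic.I).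
Qed.

Lemma L_in x f g y : `|x| = 1 -> supp_fun x f -> supp_fun x g -> `|y| <= 1 ->
  K ((phi x, phi y), (cf f, cf g)) /\ G ((phi x, phi y), (cf f, cf g)) = f y - g y.
Proof.
move=> x1 [[lf _] [df fx]] [[lg _] [dg gx]] y1.
have hJ (h : V -> R) : lin_fun h -> dnorm h = 1 -> h x = `|x| ->
    (forall w, `|pr w (cf h)| <= N w) /\ pr (phi x) (cf h) = 1.
  move=> lh dh hx; split.
    by move=> w; rewrite -{1}(psiK w) pr_cf // dnorm1_bound.
  by rewrite pr_cf // hx x1.
have [hf1 hf2] := hJ f lf df fx; have [hg1 hg2] := hJ g lg dg gx.
split; last by rewrite /G /= !pr_cf.
split; [split; [split; [split; [split|]|]|]|] => /=.
- by rewrite /N phiK.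
- by rewrite /N phiK.
- by move=> w _; exact: hf1.
- exact: hf2.
- by move=> w _; exact: hg1.
- exact: hg2.
Qed.

Lemma main_sec :
  (forall x : V, `|x| = 1 ->
     exists eps : R, 0 <= eps < 2 /\ eps_smooth eps x) ->
  exists eps : R, 0 <= eps < 2 /\
    (forall x : V, `|x| = 1 -> eps_smooth eps x).
Proof.
move=> H.
case: (pselect (K !=set0)) => [K0|K0]; last first.
  exists 0; split; first by apply/andP; split; lra.
  move=> x x1 f g hf hg; exfalso; apply: K0.
  exists ((phi x, phi 0), (cf f, cf g)).
  have h0 : `|0 : V| <= 1 by rewrite normr0.
  exact: (L_in x1 hf hg h0).1.
have [p Kp pmax] := compact_EVT_max K0 K_compact (@continuous_subspaceT _ _ K G G_cont).
move: (Kp); rewrite inE => [[[[[[hu hw] hb1] he1] hb2] he2]].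
have J1 : Jc p.1.1 p.2.1 by split => // w; exact: (hb1 w Logic.I).
have J2 : Jc p.1.1 p.2.2 by split => // w; exact: (hb2 w Logic.I).
have s1 := Fa_supp hu J1; have s2 := Fa_supp hu J2.
have [e0 [/andP[e0ge e0lt] hsm]] := H (psi p.1.1) hu.
have hM : G p <= e0.
  apply: le_trans (hsm _ _ s1 s2).
  have -> : G p = (Fa p.2.1 \- Fa p.2.2) (psi p.1.2) by rewrite /G /Fa /= psiK.
  apply: le_trans (ler_norm _) _.
  apply: (@dnorm_ge _ 2); first by lra.
  move=> v /=; apply: le_trans (ler_normB _ _) _.
  rewrite mulr_natl mulr2n; apply: lerD; [exact: (Fa_bound J1 v) | exact: (Fa_bound J2 v)].
  by rewrite /N in hw.
exists (Num.max 0 (G p)); split.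
  apply/andP; split; first by rewrite le_max lexx.
  by rewrite gt_max; apply/andP; split; [lra | exact: (le_lt_trans hM e0lt)].
move=> x x1 f g hf hg; apply: ge_sup.
  by exists `|(f \- g) 0|, 0 => //=; rewrite normr0.
move=> _ [y /= y1 <-].
apply: (@le_trans _ _ (G p)); last by rewrite le_max lexx orbT.
rewrite ler_norml; apply/andP; split.
  have y1' : `|- y| <= 1 by rewrite normrN.
  have [hK hG] := L_in x1 hf hg y1'.
  have := pmax _ (mem_set hK); rewrite hG.
  have [lf _] := hf.1; have [lg _] := hg.1.
  by rewrite -scaleN1r !linZ // -mulrBr mulN1r lerNl.
have [hK hG] := L_in x1 hf hg y1.
by have := pmax _ (mem_set hK); rewrite hG.
Qed.

End Aux.

Theorem theorem2p6 (R : realType) (V : normedModType R) :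
  finite_dim R V ->
  (forall x : V, `|x| = 1 ->
     exists eps : R, 0 <= eps < 2 /\ eps_smooth eps x) ->
  exists eps : R, 0 <= eps < 2 /\
    (forall x : V, `|x| = 1 -> eps_smooth eps x).
Proof.
move=> [n [phi [philin [psi phiK psiK]]]].
exact: (main_sec philin phiK psiK).
Qed.
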